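(* Let $m\ge 2$ and let $T$ be any hierarchy of size $m$. Let $H^{(m)}(x)=\sum_{n\ge1}H^{(m)}_nx^n$, where $H^{(m)}_n$ is the number of isomorphism classes of hierarchies of size $n$ that do not contain a subhierarchy isomorphic to $T$, and let $\rho_m$ be the radius of convergence of $H^{(m)}(x)$. Then the limit of $H^{(m)}(x)$ as $x\to\rho_m$ from the left exists (and is finite) and equals $\sum_{n=1}^{\infty}H^{(m)}_n\rho_m^n$.
   Context: A hierarchy is a finite rooted unordered tree in which no vertex has exactly one child; its size is its number of leaves. For a vertex $v$ of a hierarchy, the subhierarchy at $v$ is the hierarchy induced by $v$ and all its descendants (with root $v$); a hierarchy contains $T$ as a subhierarchy if the subhierarchy at some vertex (possibly the root) is isomorphic to $T$ as a rooted tree. *)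

(* Defs.v *)
From Stdlib Require Import Reals List Permutation.
From Coquelicot Require Import Coquelicot.

(* Plane (ordered) rooted trees; a rooted unordered tree is such a tree
   considered up to [tiso] (permutation of children at every vertex). *)
Inductive tree : Type := Node : list tree -> tree.

Inductive tiso : tree -> tree -> Prop :=
| tiso_node : forall (l1 l2 l2' : list tree),
    Permutation l2 l2' -> Forall2 tiso l1 l2' -> tiso (Node l1) (Node l2).

Fixpoint leaves (t : tree) : nat :=
  match t with
  | Node nil => 1%nat
  | Node l => (fix go (l : list tree) : nat :=
                 match l with nil => 0%nat | c :: r => (leaves c + go r)%nat end) l
  end.

Fixpoint is_hierarchy (t : tree) : Prop :=
  match t with
  | Node l => length l <> 1%nat /\
      (fix go (l : list tree) : Prop :=
         match l with nil => True | c :: r => is_hierarchy c /\ go r end) l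
  end.

Fixpoint subtree (s t : tree) : Prop :=
  s = t \/
  match t with
  | Node l => (fix go (l : list tree) : Prop :=
                 match l with nil => False | c :: r => subtree s c \/ go r end) l
  end.

Definition contains (T t : tree) : Prop := exists s, subtree s t /\ tiso s T.

(* [num_classes P n k]: among the trees t with P t and n leaves, there are
   exactly k isomorphism classes (witnessed by a list of k pairwise
   non-isomorphic representatives meeting every class). *)
Definition num_classes (P : tree -> Prop) (n k : nat) : Prop :=
  exists s : list tree,
    length s = k /\
    (forall t, In t s -> P t /\ leaves t = n) /\
    ForallOrdPairs (fun a b => ~ tiso a b) s /\
    (forall t, P t -> leaves t = n -> exists u, In u s /\ tiso t u).

Definition avoids (T t : tree) : Prop := is_hierarchy t /\ ~ contains T t.

(* Main.v *)
Require Import Defs.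
From Stdlib Require Import Reals List Permutation.
From Coquelicot Require Import Coquelicot.
From Stdlib Require FinFun.
From Stdlib Require Import Lia Lra Arith Classical ClassicalEpsilon.
From Stdlib Require Import List Permutation.
Open Scope nat_scope.


Section TI.
Variable P : tree -> Prop.
Hypothesis HP : forall l, Forall P l -> P (Node l).
Fixpoint tree_ind2 (t : tree) : P t :=
  match t with
  | Node l => HP l ((fix go (l : list tree) : Forall P l :=
      match l with nil => Forall_nil _ | c :: r => Forall_cons _ (tree_ind2 c) (go r) end) l)
  end.
End TI.

Lemma tiso_refl : forall t, tiso t t.
Proof.
  apply tree_ind2. intros l Hl. apply (tiso_node l l l (Permutation_refl _)).
  induction Hl; constructor; auto.
Qed.

Lemma tiso_sym : forall t u, tiso t u -> tiso u t.
Proof.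
  intro t; pattern t; apply tree_ind2; clear t. intros l1 IH u Hu.
  inversion Hu as [l1' l2 l2' Hp HF]; subst.
  assert (HF' : Forall2 tiso l2' l1).
  { clear Hp Hu. revert IH. induction HF as [|x y l l' Hxy _ IHF]; intro IH; constructor; inversion IH; subst; auto. }
  destruct (Permutation_Forall2 (Permutation_sym Hp) HF') as [l1'' [Hp2 HF2]].
  econstructor; eauto.
Qed.

Lemma tiso_trans : forall t u v, tiso t u -> tiso u v -> tiso t v.
Proof.
  intro t; pattern t; apply tree_ind2; clear t. intros l1 IH u v Hu Hv.
  inversion Hu as [l1' l2 l2' Hp HF]; subst.
  inversion Hv as [l2x l3 l3' Hp3 HF3]; subst.
  destruct (Permutation_Forall2 Hp HF3) as [l3'' [Hp4 HF4]].
  apply (tiso_node l1 l3 l3''). eapply Permutation_trans; eauto.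
  clear - IH HF HF4. revert l3'' HF4 IH. induction HF as [|x y l l' Hxy _ IHF]; intros l3'' HF4 IH; inversion HF4; subst; constructor; inversion IH; subst; eauto.
Qed.

Fixpoint sumL (l : list tree) : nat := match l with nil => 0 | c :: r => leaves c + sumL r end.
Lemma leaves_Node l : leaves (Node l) = match l with nil => 1 | _ => sumL l end.
Proof. destruct l; simpl; auto. Qed.

Lemma leaves_tiso : forall t u, tiso t u -> leaves t = leaves u.
Proof.
  intro t; pattern t; apply tree_ind2; clear t. intros l1 IH u Hu.
  inversion Hu as [l1' l2 l2' Hp HF]; subst.
  rewrite !leaves_Node.
  assert (E : sumL l1 = sumL l2' /\ length l1 = length l2').
  { clear Hp Hu. revert IH. induction HF as [|x y l l' Hxy _ IHF]; intro IH; simpl; [auto|].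
    inversion IH; subst. destruct IHF as [E1 E2]. auto. rewrite (H1 y Hxy), E1, E2. auto. }
  assert (E2 : sumL l2 = sumL l2' /\ length l2 = length l2').
  { split; [|apply Permutation_length; auto]. clear - Hp. induction Hp; simpl; lia. }
  destruct l1, l2; simpl in *; auto; destruct E, E2; try lia.
Qed.

Lemma leaves_pos : forall t, 1 <= leaves t.
Proof. apply tree_ind2. intros [|c r] H; simpl; auto. inversion H; subst. lia. Qed.

Fixpoint enc (t : tree) : list bool :=
  match t with Node l => true :: (fix go l := match l with nil => nil | c :: r => enc c ++ go r end) l ++ false :: nil end.
Fixpoint encl (l : list tree) : list bool := match l with nil => nil | c :: r => enc c ++ encl r end.
Lemma enc_Node l : enc (Node l) = true :: encl l ++ false :: nil.
Proof. simpl. auto. Qed.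

Lemma enc_prefix : forall t t' r r', enc t ++ r = enc t' ++ r' -> t = t' /\ r = r'.
Proof.
  intro t; pattern t; apply tree_ind2; clear t. intros l IH t' r r' E.
  destruct t' as [l']. rewrite !enc_Node in E. simpl in E. injection E as E.
  rewrite <- !app_assoc in E. simpl in E.
  assert (forall l' r r', encl l ++ false :: r = encl l' ++ false :: r' -> l = l' /\ r = r').
  { clear E l' r r'. induction IH as [|c cs Hc _ IHcs]; intros [|c' cs'] r r' E; simpl in *.
    - injection E; auto.
    - destruct c'; rewrite enc_Node in E; simpl in E; discriminate.
    - destruct c; rewrite enc_Node in E; simpl in E; discriminate.
    - rewrite <- !app_assoc in E. destruct (Hc _ _ _ E) as [-> E2].
      destruct (IHcs _ _ _ E2) as [-> ->]. auto. }
  destruct (H _ _ _ E) as [-> ->]. auto.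
Qed.

Lemma enc_inj : FinFun.Injective enc.
Proof. intros t t' E. apply (enc_prefix t t' nil nil). rewrite !app_nil_r; auto. Qed.

Fixpoint nv (t : tree) : nat := match t with Node l => S ((fix go l := match l with nil => 0 | c :: r => nv c + go r end) l) end.
Fixpoint nvl (l : list tree) : nat := match l with nil => 0 | c :: r => nv c + nvl r end.
Lemma nv_Node l : nv (Node l) = S (nvl l).
Proof. simpl. auto. Qed.

Lemma enc_len : forall t, length (enc t) = 2 * nv t.
Proof.
  apply tree_ind2. intros l IH. rewrite enc_Node, nv_Node. simpl. rewrite length_app. simpl.
  enough (length (encl l) = 2 * nvl l) by lia.
  induction IH; simpl; auto. rewrite length_app. lia.
Qed.

Fixpoint hl (l : list tree) : Prop := match l with nil => True | c :: r => is_hierarchy c /\ hl r end.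
Lemma hier_Node l : is_hierarchy (Node l) <-> length l <> 1 /\ hl l.
Proof. simpl. split; intros [A B]; split; auto; clear A; induction l; simpl in *; tauto. Qed.

Lemma nv_bound : forall t, is_hierarchy t -> nv t + 1 <= 2 * leaves t.
Proof.
  intro t; pattern t; apply tree_ind2; clear t. intros l IH Hh. apply hier_Node in Hh. destruct Hh as [Hlen Hh].
  rewrite nv_Node, leaves_Node.
  destruct l as [|c [|c2 r]]. simpl; lia. simpl in Hlen; lia.
  assert (forall l, Forall (fun t => is_hierarchy t -> nv t + 1 <= 2 * leaves t) l -> hl l ->
     nvl l + length l <= 2 * sumL l).
  { clear. induction l; simpl; intros F H; auto. inversion F; subst. destruct H.
    specialize (IHl H3 H0). specialize (H2 H). lia. }
  specialize (H _ IH Hh). simpl in *. lia.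
Qed.

Fixpoint allbl (L : nat) : list (list bool) :=
  match L with 0 => nil :: nil | S L => nil :: map (cons true) (allbl L) ++ map (cons false) (allbl L) end.
Lemma allbl_len L : length (allbl L) < 2 ^ (S L).
Proof. induction L; simpl; auto. rewrite length_app, !length_map. simpl in *. lia. Qed.
Lemma allbl_in : forall L w, length w <= L -> In w (allbl L).
Proof.
  induction L; intros [|b w] H; simpl in *; auto; try lia.
  right. apply in_or_app. destruct b; [left|right]; apply in_map; apply IHL; lia.
Qed.

Lemma nodup_of_noniso : forall s, ForallOrdPairs (fun a b => ~ tiso a b) s -> NoDup s.
Proof.
  induction s; intros H; constructor; inversion H; subst; auto.
  intro Hin. rewrite Forall_forall in H2. apply (H2 a Hin). apply tiso_refl.
Qed.

Lemma count_upper (P : tree -> Prop) n k : (forall t, P t -> is_hierarchy t) -> num_classes P n k -> k <= 2 ^ (S (4 * n)).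
Proof.
  intros HP [s [Hl [Hin [Hno _]]]]. subst k.
  rewrite <- (length_map enc). apply Nat.lt_le_incl. eapply Nat.le_lt_trans; [|apply allbl_len].
  apply NoDup_incl_length. apply FinFun.Injective_map_NoDup. apply enc_inj. apply nodup_of_noniso; auto.
  intros w Hw. apply in_map_iff in Hw. destruct Hw as [t [<- Ht]]. apply allbl_in.
  destruct (Hin t Ht) as [Pt Lt]. rewrite enc_len. pose proof (nv_bound t (HP t Pt)). lia.
Qed.

Lemma pigeon_gen : forall (u s : list tree),
  ForallOrdPairs (fun a b => ~ tiso a b) u ->
  (forall t, In t u -> exists v, In v s /\ tiso t v) -> length u <= length s.
Proof.
  induction u as [|x u IH]; intros s Hf Hr; simpl; [lia|].
  inversion Hf as [|? ? Hx Hu]; subst.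
  destruct (Hr x (or_introl eq_refl)) as [v [Hv Hxv]].
  destruct (in_split _ _ Hv) as [s1 [s2 ->]].
  rewrite length_app; simpl.
  enough (length u <= length (s1 ++ s2)) by (rewrite length_app in H; lia).
  apply IH; auto. intros t Ht. destruct (Hr t (or_intror Ht)) as [w [Hw Htw]].
  exists w; split; auto.
  apply in_app_or in Hw. destruct Hw as [Hw|[Hw|Hw]]; try (apply in_or_app; auto).
  subst w. exfalso. rewrite Forall_forall in Hx. apply (Hx t Ht).
  eapply tiso_trans; eauto. apply tiso_sym; auto.
Qed.

Lemma pigeon (P : tree -> Prop) n k u : num_classes P n k ->
  ForallOrdPairs (fun a b => ~ tiso a b) u -> (forall t, In t u -> P t /\ leaves t = n) ->
  length u <= k.
Proof.
  intros [s [Hl [_ [_ Hcov]]]] Hf Hu. subst k. apply pigeon_gen; auto.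
  intros t Ht. destruct (Hu t Ht). apply Hcov; auto.
Qed.

Lemma subtree_Node s l : subtree s (Node l) -> s = Node l \/ exists c, In c l /\ subtree s c.
Proof.
  simpl. intros [H|H]; auto. right. induction l as [|c r IH]; [contradiction|].
  destruct H as [H|H]. exists c; simpl; auto. destruct (IH H) as [c' [? ?]]. exists c'; simpl; auto.
Qed.

Lemma avoid_pair T a b : avoids T a -> avoids T b -> leaves a + leaves b <> leaves T ->
  avoids T (Node (a :: b :: nil)).
Proof.
  intros [Ha Na] [Hb Nb] Hn. split. simpl; auto.
  intros [s [Hs Hi]]. apply subtree_Node in Hs. destruct Hs as [->|[c [Hc Hsc]]].
  - apply leaves_tiso in Hi. simpl in Hi. lia.
  - destruct Hc as [<-|[<-|[]]]. apply Na; exists s; auto. apply Nb; exists s; auto.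
Qed.

Definition star n := Node (repeat (Node nil) n).
Lemma avoid_star T n : 2 <= leaves T -> 2 <= n -> n <> leaves T -> avoids T (star n) /\ leaves (star n) = n.
Proof.
  intros HT Hn HnT.
  assert (Hl : leaves (star n) = n).
  { unfold star. rewrite leaves_Node. destruct n; [lia|]. simpl repeat.
    transitivity (sumL (repeat (Node nil) (S n))); [reflexivity|].
    clear. induction (S n); simpl; auto. }
  split; auto. split.
  - apply hier_Node. rewrite repeat_length. split; [lia|]. clear. induction n; simpl; auto.

  - intros [s [Hs Hi]]. apply subtree_Node in Hs. destruct Hs as [->|[c [Hc Hsc]]].
    + apply leaves_tiso in Hi. fold (star n) in Hi. lia.
    + apply repeat_spec in Hc. subst c. simpl in Hsc. destruct Hsc as [->|[]].
      apply leaves_tiso in Hi. simpl in Hi. lia.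
Qed.

Lemma greedy {X} (E : X -> X -> Prop) : forall N l, length l <= N -> NoDup l ->
  (forall x y z, In x l -> In y l -> In z l -> E x y -> E x z -> y = z \/ x = y \/ x = z) ->
  exists l', incl l' l /\ ForallOrdPairs (fun x y => ~ E x y) l' /\ length l <= 2 * length l'.
Proof.
  induction N as [|N IH]; intros l Hlen Hnd Hc.
  - destruct l; simpl in *; [|lia]. exists nil. repeat split; auto. intros ? []. constructor.
  - destruct l as [|x r]. exists nil. repeat split; auto. intros ? []. constructor.
    inversion Hnd as [|? ? Hx Hr]; subst. simpl in Hlen.
    destruct (classic (exists y, In y r /\ E x y)) as [[y [Hy Exy]]|Hno].
    + destruct (in_split _ _ Hy) as [r1 [r2 Er]]. subst r.
      assert (Hnd' : NoDup (r1 ++ r2)) by (eapply NoDup_remove_1; eauto).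
      assert (Hyn : ~ In y (r1 ++ r2)) by (eapply NoDup_remove_2; eauto).
      destruct (IH (r1 ++ r2)) as [l'' [Hi [Hf Hl]]]; auto.
      { rewrite length_app in *; simpl in *; lia. }
      { intros a b c Ha Hb Hc'. apply Hc; simpl; right; apply in_or_app; apply in_app_or in Ha; apply in_app_or in Hb; apply in_app_or in Hc'; simpl; tauto. }
      exists (x :: l''). split; [|split].
      * intros z [<-|Hz]; simpl; auto. right. apply Hi in Hz. apply in_app_or in Hz. apply in_or_app. simpl; tauto.
      * constructor; auto. apply Forall_forall. intros z Hz Exz.
        assert (Hz' := Hi z Hz).
        destruct (Hc x y z) as [E1|[E1|E1]].
        simpl; auto. simpl; right; apply in_or_app; simpl; auto.
        simpl; right; apply in_app_or in Hz'; apply in_or_app; simpl; tauto. auto. auto.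
        subst z; contradiction.
        subst y; apply Hx; apply in_or_app; simpl; auto.
        subst z; apply Hx; apply in_app_or in Hz'; apply in_or_app; simpl; tauto.
      * simpl. rewrite !length_app in *; simpl in *; lia.
    + destruct (IH r) as [l'' [Hi [Hf Hl]]]; auto. lia.
      { intros a b c Ha Hb Hc'. apply Hc; simpl; auto. }
      exists (x :: l''). split; [|split].
      * intros z [<-|Hz]; simpl; auto.
      * constructor; auto. apply Forall_forall. intros z Hz Exz. apply Hno. exists z; auto.
      * simpl; lia.
Qed.

Lemma NoDup_flat_map' {A B'} (f : A -> list B') (g : B' -> A) l : NoDup l ->
  (forall a, In a l -> NoDup (f a)) -> (forall a b, In a l -> In b (f a) -> g b = a) ->
  NoDup (flat_map f l).
Proof.
  induction l as [|a l IH]; intros Hn Hf Hg; simpl; [constructor|].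
  inversion Hn; subst. apply NoDup_app.
  - apply Hf; simpl; auto.
  - apply IH; auto. intros; apply Hf; simpl; auto. intros; apply Hg; simpl; auto.
  - intros b Hb Hb2. apply in_flat_map in Hb2. destruct Hb2 as [a' [Ha' Hb']].
    assert (g b = a) by (apply Hg; simpl; auto). assert (g b = a') by (apply Hg; simpl; auto).
    subst. congruence.
Qed.

Lemma list_prod_fm {A B'} (l : list A) (l' : list B') : list_prod l l' = flat_map (fun x => map (fun y => (x, y)) l') l.
Proof. induction l; simpl; congruence. Qed.

Lemma NoDup_prod {A B'} (l : list A) (l' : list B') : NoDup l -> NoDup l' -> NoDup (list_prod l l').
Proof.
  intros H1 H2. rewrite list_prod_fm. apply (NoDup_flat_map' _ fst); auto.
  - intros a _. apply FinFun.Injective_map_NoDup; auto. intros y y' E; congruence.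
  - intros a b _ Hb. apply in_map_iff in Hb. destruct Hb as [y [<- _]]. reflexivity.
Qed.

Lemma len_fm_sum {B'} (f : nat -> list B') N :
  INR (length (flat_map f (seq 0 (S N)))) = sum_f_R0 (fun k => INR (length (f k))) N.
Proof.
  induction N. simpl. rewrite app_nil_r. reflexivity.
  rewrite seq_S, flat_map_app, length_app, plus_INR, IHN. simpl. rewrite app_nil_r. reflexivity.
Qed.

Lemma uniq_rep s a b : ForallOrdPairs (fun a b => ~ tiso a b) s -> In a s -> In b s -> tiso a b -> a = b.
Proof.
  induction s as [|x s IH]; intros Hf Ha Hb Hab; [contradiction|].
  inversion Hf as [|? ? Hx Hs]; subst. rewrite Forall_forall in Hx.
  destruct Ha as [<-|Ha], Hb as [<-|Hb]; auto.
  - exfalso; apply (Hx b Hb Hab).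
  - exfalso; apply (Hx a Ha). apply tiso_sym; auto.
Qed.

Lemma FOP_map {A B'} (R : B' -> B' -> Prop) (f : A -> B') l :
  ForallOrdPairs (fun x y => R (f x) (f y)) l -> ForallOrdPairs R (map f l).
Proof.
  induction 1; simpl; constructor; auto. apply Forall_forall. intros z Hz.
  apply in_map_iff in Hz. destruct Hz as [w [<- Hw]]. rewrite Forall_forall in H. auto.
Qed.

Open Scope R_scope.
Lemma pair_ineq (T : tree) (H : nat -> nat) (s : nat -> list tree)
  (Hs : forall k, length (s k) = H k /\ (forall t, In t (s k) -> avoids T t /\ leaves t = k) /\
        ForallOrdPairs (fun a b => ~ tiso a b) (s k))
  (HN : forall n, num_classes (avoids T) n (H n)) n :
  n <> leaves T -> sum_f_R0 (fun k => INR (H k) * INR (H (n - k)%nat)) n <= 2 * INR (H n).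
Proof.
  intro HnT.
  set (OP := flat_map (fun k => list_prod (s k) (s (n - k)%nat)) (seq 0 (S n))).
  assert (Hlen : INR (length OP) = sum_f_R0 (fun k => INR (H k) * INR (H (n - k)%nat)) n).
  { unfold OP. rewrite len_fm_sum. apply sum_eq. intros k _. rewrite length_prod, mult_INR.
    destruct (Hs k) as [-> _]. destruct (Hs (n - k)%nat) as [-> _]. reflexivity. }
  assert (Hmem : forall p, In p OP -> exists k, (k <= n)%nat /\ In (fst p) (s k) /\ In (snd p) (s (n - k)%nat)).
  { intros [a b] Hp. unfold OP in Hp. apply in_flat_map in Hp. destruct Hp as [k [Hk Hp]].
    apply in_prod_iff in Hp. apply in_seq in Hk. exists k. split; [lia|]. simpl; tauto. }
  assert (Hnd : NoDup OP).
  { unfold OP. apply (NoDup_flat_map' _ (fun p => leaves (fst p))). apply seq_NoDup.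
    - intros k _. apply NoDup_prod; apply nodup_of_noniso; apply Hs.
    - intros k p _ Hp. destruct p as [a b]. apply in_prod_iff in Hp. destruct Hp as [Ha _].
      apply (proj2 (Hs k)); auto. }
  set (mk := fun p : tree * tree => Node (fst p :: snd p :: nil)).
  set (E := fun p q => tiso (mk p) (mk q)).
  assert (Hcl : forall p q, In p OP -> In q OP -> E p q -> q = p \/ q = (snd p, fst p)).
  { intros [a b] [c d] Hp Hq Hpq. unfold E, mk in Hpq; simpl in Hpq.
    destruct (Hmem _ Hp) as [k [Hk [Ha Hb]]]. destruct (Hmem _ Hq) as [k' [Hk' [Hc Hd]]]. simpl in *.
    inversion Hpq as [? ? l2' Hperm HF]; subst.
    assert (Lx : forall x j, In x (s j) -> leaves x = j) by (intros x j Hx; apply (proj2 (Hs j)); auto).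
    assert (Sx : forall x y j j', In x (s j) -> In y (s j') -> tiso x y -> x = y).
    { intros x y j j' Hx Hy Hxy. pose proof (leaves_tiso _ _ Hxy) as L.
      rewrite (Lx _ _ Hx), (Lx _ _ Hy) in L. subst j'. eapply uniq_rep; eauto. apply Hs. }
    apply Permutation_length_2_inv in Hperm. destruct Hperm as [->| ->];
      inversion HF as [|? ? ? ? H1 HF2]; subst; inversion HF2 as [|? ? ? ? H2 _]; subst.
    - left. f_equal; symmetry; [apply (Sx a c k k')|apply (Sx b d (n-k)%nat (n-k')%nat)]; auto.
    - right. f_equal; symmetry; [apply (Sx b c (n-k)%nat k')|apply (Sx a d k (n-k')%nat)]; auto. }
  destruct (greedy E (length OP) OP (le_n _) Hnd) as [l' [Hincl [Hf Hl]]].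
  { intros x y z Hx Hy Hz Exy Exz.
    destruct (Hcl _ _ Hx Hy Exy) as [->| ->], (Hcl _ _ Hx Hz Exz) as [->| ->]; auto. }
  assert (Hu : (length (map mk l') <= H n)%nat).
  { apply (pigeon (avoids T) n); auto.
    - apply FOP_map. exact Hf.
    - intros t Ht. apply in_map_iff in Ht. destruct Ht as [[a b] [<- Hp]].
      destruct (Hmem _ (Hincl _ Hp)) as [k [Hk [Ha Hb]]]. simpl in *.
      destruct (proj1 (proj2 (Hs k)) a Ha) as [Aa La].
      destruct (proj1 (proj2 (Hs (n - k)%nat)) b Hb) as [Ab Lb].
      assert (leaves (mk (a, b)) = n)%nat by (unfold mk; simpl; rewrite La, Lb; lia).
      split; auto. apply avoid_pair; auto. simpl; rewrite La, Lb; lia. }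
  rewrite length_map in Hu. rewrite <- Hlen.
  apply le_INR in Hl, Hu. rewrite mult_INR in Hl. simpl in Hl. lra.
Qed.
Open Scope R_scope.

Lemma bern_neg : forall N u, 0 <= u <= 1 -> 1 - INR N * u <= (1 - u) ^ N.
Proof.
  induction N; intros u Hu. simpl; lra.
  rewrite S_INR. simpl. specialize (IHN u Hu). pose proof (pos_INR N). nra.
Qed.

Lemma CV_const c : Un_cv (fun _ => c) c.
Proof. intros e He. exists 0%nat. intros. unfold Rdist. rewrite Rminus_diag, Rabs_R0. lra. Qed.

Lemma pow_le1 x n : 0 <= x <= 1 -> x ^ n <= 1.
Proof. intros. rewrite <- (pow1 n). apply pow_incr. lra. Qed.

Lemma sum_ineq (c a : nat -> R) (m : nat) x :
  0 <= x <= 1 -> (forall n, 0 <= a n) -> (forall n, 0 <= c n) -> (forall n, n <> m -> c n <= 2 * a n) ->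
  forall N, sum_f_R0 (fun n => c n * x ^ n) N <= 2 * sum_f_R0 (fun n => a n * x ^ n) N + (if le_lt_dec m N then c m else 0).
Proof.
  intros Hx Ha Hc Hca. induction N.
  - simpl. destruct (le_lt_dec m 0).
    + assert (m = 0)%nat by lia. subst. pose proof (Ha 0%nat). simpl. nra.
    + rewrite !Rmult_1_r. specialize (Hca 0%nat ltac:(lia)). lra.
  - simpl. assert (0 <= x ^ S N) by (apply pow_le; lra).
    assert (x ^ S N <= 1) by (apply pow_le1; lra). simpl in *.
    pose proof (Ha (S N)). pose proof (Hc m).
    destruct (le_lt_dec m N), (le_lt_dec m (S N)); try lia.
    + specialize (Hca (S N) ltac:(lia)). nra.
    + destruct (Nat.eq_dec m (S N)) as [Em|Nm].
      * subst. nra.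
      * specialize (Hca (S N) ltac:(lia)). nra.
    + specialize (Hca (S N) ltac:(lia)). nra.
Qed.

Lemma rad_bounds (a : nat -> R) (m : nat) :
  (forall n, 0 <= a n) -> (forall n, a n <= 2 * 16 ^ n) ->
  (forall n, (2 <= n)%nat -> n <> m -> 1 <= a n) ->
  exists rho, CV_radius a = Finite rho /\ / 16 <= rho <= 1.
Proof.
  intros Ha Hu Hl. destruct (CV_radius_bounded a) as [Hub Hlub].
  assert (L : Rbar_le (/16) (CV_radius a)).
  { apply Hub. exists 2. intros n. rewrite Rabs_pos_eq.
    - specialize (Hu n). assert (E : 16 ^ n * (/16) ^ n = 1) by (rewrite <- Rpow_mult_distr, Rinv_r, pow1; lra).
      assert (0 < (/16) ^ n) by (apply pow_lt; lra). nra.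
    - apply Rmult_le_pos; auto. apply pow_le; lra. }
  assert (U : Rbar_le (CV_radius a) 1).
  { apply Hlub. intros r [M HM]. simpl. destruct (Rle_lt_dec r 1) as [|Hr]; auto. exfalso.
    destruct (INR_unbounded (M / (r - 1))) as [n0 Hn0].
    set (n := (n0 + m + 2)%nat). specialize (HM n).
    assert (1 <= a n) by (apply Hl; unfold n; lia).
    pose proof (Rle_pow_lin (r - 1) n ltac:(lra)) as B. replace (1 + (r - 1)) with r in B by ring.
    assert (INR n0 <= INR n) by (apply le_INR; unfold n; lia).
    assert (0 <= r ^ n) by (apply pow_le; lra).
    rewrite Rabs_pos_eq in HM by (apply Rmult_le_pos; auto).
    assert (M / (r - 1) * (r - 1) = M) by (field; lra).
    assert (INR n * (r - 1) > M) by nra. nra. }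
  destruct (CV_radius a) as [rho| |]; simpl in *; try contradiction.
  exists rho; auto.
Qed.

Lemma bound_inside (a : nat -> R) (m : nat) rho :
  (forall n, 0 <= a n) -> (forall n, n <> m -> PS_mult a a n <= 2 * a n) ->
  CV_radius a = Finite rho -> rho <= 1 ->
  forall x, 0 <= x < rho -> forall N, sum_f_R0 (fun n => a n * x ^ n) N <= PS_mult a a m + 2.
Proof.
  intros Ha Hc Hr Hr1 x Hx N.
  assert (Hin : Rbar_lt (Rabs x) (CV_radius a)) by (rewrite Hr, Rabs_pos_eq; simpl; lra).
  assert (Hcp : forall n, 0 <= PS_mult a a n).
  { intros n. unfold PS_mult. apply cond_pos_sum. intros; apply Rmult_le_pos; auto. }
  set (h := PSeries a x).
  assert (Hh : is_pseries a x h).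
  { destruct (CV_radius_inside a x Hin) as [l Hl]. pose proof Hl as Hl'. apply is_pseries_R in Hl'.
    unfold h, PSeries. rewrite (is_series_unique _ _ Hl'). exact Hl. }
  assert (Hhh := is_pseries_mult a a x h h Hh Hh Hin Hin).
  apply is_pseries_R, is_series_Reals in Hh. apply is_pseries_R, is_series_Reals in Hhh.
  assert (Hnn : forall n, 0 <= a n * x ^ n) by (intros; apply Rmult_le_pos; auto; apply pow_le; lra).
  assert (HN := sum_incr _ N _ Hh Hnn).
  assert (h0 : 0 <= h) by (pose proof (cond_pos_sum _ N Hnn); lra).
  assert (Hq : h * h <= 2 * h + PS_mult a a m).
  { eapply Rle_cv_lim; [ | exact Hhh | apply CV_plus; [apply CV_mult; [apply CV_const | exact Hh] | apply CV_const]].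
    intros N'. simpl. eapply Rle_trans. apply (sum_ineq (PS_mult a a) a m x); auto; lra.
    destruct le_lt_dec; pose proof (Hcp m); lra. }
  pose proof (Hcp m). nra.
Qed.

Lemma scal_le (a : nat -> R) rho t N : (forall n, 0 <= a n) -> 0 <= rho -> 0 <= t <= 1 ->
  t ^ N * sum_f_R0 (fun n => a n * rho ^ n) N <= sum_f_R0 (fun n => a n * (rho * t) ^ n) N.
Proof.
  intros Ha Hr Ht. rewrite scal_sum. apply sum_Rle. intros n Hn.
  rewrite Rpow_mult_distr. replace N with (n + (N - n))%nat by lia. rewrite pow_add.
  assert (0 <= t ^ n) by (apply pow_le; lra). assert (0 <= t ^ (N - n)) by (apply pow_le; lra).
  assert (t ^ (N - n) <= 1) by (apply pow_le1; lra). assert (0 <= rho ^ n) by (apply pow_le; lra).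
  pose proof (Ha n). assert (0 <= a n * rho ^ n * t ^ n) by (apply Rmult_le_pos; [apply Rmult_le_pos|]; auto). replace (a n * rho ^ n * (t ^ n * t ^ (N - n))) with ((a n * rho ^ n * t ^ n) * t ^ (N - n)) by ring. replace (a n * (rho ^ n * t ^ n)) with ((a n * rho ^ n * t ^ n) * 1) by ring. apply Rmult_le_compat_l; auto.
Qed.

Lemma at_rho (a : nat -> R) rho C : (forall n, 0 <= a n) -> 0 < rho -> 0 <= C ->
  (forall x, 0 <= x < rho -> forall N, sum_f_R0 (fun n => a n * x ^ n) N <= C) ->
  forall N, sum_f_R0 (fun n => a n * rho ^ n) N <= C.
Proof.
  intros Ha Hr HC Hb N. set (P := sum_f_R0 (fun n => a n * rho ^ n) N).
  destruct (Rle_lt_dec P C) as [|HP]; auto. exfalso.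
  pose proof (pos_INR N) as HNp.
  set (u := (P - C) / (2 * P * (INR N + 1))).
  assert (Pp : 0 < P) by lra.
  assert (Hu0 : 0 < u) by (unfold u; apply Rdiv_lt_0_compat; nra).
  assert (Eu : (INR N + 1) * u = (P - C) / (2 * P)) by (unfold u; field; lra).
  assert (HuN : INR N * u <= (P - C) / (2 * P)) by nra.
  assert (Hq : (P - C) / (2 * P) <= 1/2).
  { apply Rmult_le_reg_r with (2 * P). lra. unfold Rdiv. rewrite Rmult_assoc, Rinv_l by lra. lra. }
  assert (Hu1 : u <= 1/2) by nra.
  assert (Hx : 0 <= rho * (1 - u) < rho) by (split; nra).
  specialize (Hb _ Hx N). pose proof (scal_le a rho (1 - u) N Ha ltac:(lra) ltac:(lra)) as Hs.
  pose proof (bern_neg N u ltac:(lra)). fold P in Hs.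
  assert ((P - C) / (2 * P) * P = (P - C) / 2) by (field; lra).
  assert ((1 - INR N * u) * P <= (1 - u) ^ N * P) by (apply Rmult_le_compat_r; lra).
  assert ((1 - (P - C) / (2 * P)) * P <= (1 - INR N * u) * P) by (apply Rmult_le_compat_r; lra).
  lra.
Qed.

Lemma analytic (a : nat -> R) (m : nat) :
  (forall n, 0 <= a n) -> (forall n, a n <= 2 * 16 ^ n) ->
  (forall n, (2 <= n)%nat -> n <> m -> 1 <= a n) ->
  (forall n, n <> m -> PS_mult a a n <= 2 * a n) ->
  exists rho : R,
    0 < rho /\ CV_radius a = Finite rho /\
    ex_series (fun n => a n * rho ^ n) /\
    filterlim (PSeries a) (at_left rho) (locally (Series (fun n => a n * rho ^ n))).
Proof.
  intros Ha Hu Hl Hc.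
  destruct (rad_bounds a m Ha Hu Hl) as [rho [Hr [Hr1 Hr2]]].
  assert (Hcp : 0 <= PS_mult a a m).
  { unfold PS_mult. apply cond_pos_sum. intros; apply Rmult_le_pos; auto. }
  assert (Hb := bound_inside a m rho Ha Hc Hr Hr2).
  assert (Hr0 : 0 < rho) by (assert (0 < / 16) by (apply Rinv_0_lt_compat; lra); lra).
  assert (Hrho := at_rho a rho (PS_mult a a m + 2) Ha Hr0 ltac:(lra) Hb).
  assert (Hnn : forall n, 0 <= a n * rho ^ n) by (intros; apply Rmult_le_pos; auto; apply pow_le; lra).
  destruct (growing_cv (fun N => sum_f_R0 (fun n => a n * rho ^ n) N)) as [l Hlim].
  { intros N. pose proof (Hnn (S N)). change (sum_f_R0 (fun n => a n * rho ^ n) N <= sum_f_R0 (fun n => a n * rho ^ n) N + a (S N) * rho ^ (S N)). lra. }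
  { exists (PS_mult a a m + 2). intros y [i ->]. apply Hrho. }
  assert (Hs : is_series (fun n => a n * rho ^ n) l) by (apply is_series_Reals; exact Hlim).
  assert (Hex : ex_series (fun n => a n * rho ^ n)) by (exists l; auto).
  exists rho. split; [exact Hr0|]. split; auto. split; auto.
  assert (HA := Abel a).
  rewrite Hr in HA. simpl in HA. apply HA; simpl; auto.
  exists l. apply is_pseries_R. auto.
Qed.
Open Scope R_scope.

Theorem lemma3p4 (m : nat) (T : tree) (H : nat -> nat) :
  (2 <= m)%nat ->
  is_hierarchy T ->
  leaves T = m ->
  (forall n : nat, num_classes (avoids T) n (H n)) ->
  exists rho : R,
    0 < rho /\
    CV_radius (fun n => INR (H n)) = Finite rho /\
    ex_series (fun n => INR (H n) * rho ^ n) /\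
    filterlim (PSeries (fun n => INR (H n))) (at_left rho)
      (locally (Series (fun n => INR (H n) * rho ^ n))).
Proof.
  intros Hm HT HTm HN.
  set (s := fun k => proj1_sig (constructive_indefinite_description _ (HN k))).
  assert (Hs : forall k, length (s k) = H k /\ (forall t, In t (s k) -> avoids T t /\ leaves t = k) /\
        ForallOrdPairs (fun a b => ~ tiso a b) (s k)).
  { intros k. unfold s. destruct (constructive_indefinite_description _ (HN k)) as [l [A1 [A2 [A3 A4]]]].
    simpl. auto. }
  apply (analytic _ m).
  - intros; apply pos_INR.
  - intros n. pose proof (count_upper (avoids T) n (H n) (fun t Ht => proj1 Ht) (HN n)) as Hb.
    apply le_INR in Hb. rewrite pow_INR in Hb. simpl INR in Hb.
    replace (S (4 * n)) with (1 + 4 * n)%nat in Hb by lia. rewrite pow_add, pow_mult in Hb.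
    replace ((1 + 1) ^ 1) with 2 in Hb by ring. replace ((1 + 1) ^ 4) with 16 in Hb by ring. exact Hb.
  - intros n Hn2 Hnm. destruct (avoid_star T n ltac:(lia) Hn2 ltac:(lia)) as [Av Lv].
    pose proof (pigeon (avoids T) n (H n) (star n :: nil) (HN n)) as P.
    assert (1 <= H n)%nat.
    { apply P. constructor. constructor. constructor. intros t [<-|[]]; auto. }
    apply le_INR in H0. simpl in H0. lra.
  - intros n Hnm. unfold PS_mult. apply (pair_ineq T H s Hs HN n). lia.
Qed.
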